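(* There exist infinitely many graphs which are $1$-critical but not $0$-critical.
   Context: All graphs are finite and simple; $\mathrm{Forb}(H)$ is the family of graphs with no induced subgraph isomorphic to $H$. A family is hereditary if closed under isomorphism and induced subgraphs. $\mathcal{H}(s,t)$ is the family of graphs whose vertex set can be partitioned into $s$ stable sets and $t$ cliques. For a hereditary family $\mathcal{F}$, $\chi_c(\mathcal{F})$ is the maximum integer $l$ such that $\mathcal{H}(s,l-s)\subseteq\mathcal{F}$ for some $0\le s\le l$. Let $l=\chi_c(\mathcal{F})$. A graph $J$ is $\mathcal{F}$-reduced if there is an integer $0\le s\le l-1$ such that $\mathcal{F}$ contains every graph whose vertex set can be partitioned into $l$ parts, the first of which induces a graph isomorphic to an induced subgraph of $J$, $s$ of the remaining parts are stable sets and the other $l-1-s$ are cliques; $\mathrm{red}(\mathcal{F})$ is the family of $\mathcal{F}$-reduced graphs. A graph $G$ is an $s$-star (for an integer $s\ge0$) if there is $S\subseteq V(G)$ with $|S|\le s$ such that $G-S$ is complete or edgeless and every vertex of $S$ is adjacent either to all vertices of $V(G)\setminus S$ or to none of them (so $0$-stars are exactly complete or edgeless graphs). A hereditary family $\mathcal{F}$ is $s$-critical if there exists $n_0$ such that every $K\in\mathrm{red}(\mathcal{F})$ with $|V(K)|\ge n_0$ is an $s$-star. A graph $H$ is $s$-critical if $\mathrm{Forb}(H)$ is $s$-critical. *)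

(* Defs.v *)
From mathcomp Require Import all_boot.
Set Implicit Arguments. Unset Strict Implicit. Unset Printing Implicit Defensive.

Record graph := Graph {
  V : finType;
  adj : rel V;
  adj_sym : symmetric adj;
  adj_irr : irreflexive adj
}.

Definition embeds (G H : graph) : Prop :=
  exists f : V G -> V H, injective f /\
    forall x y, adj (f x) (f y) = adj x y.

Definition iso (G H : graph) : Prop :=
  exists f : V G -> V H, bijective f /\
    forall x y, adj (f x) (f y) = adj x y.

Definition family := graph -> Prop.

Definition hereditary (F : family) : Prop :=
  (forall G H, iso G H -> F G -> F H) /\
  (forall G H, embeds H G -> F G -> F H).

Definition Forb (H : graph) : family := fun G => ~ embeds H G.

Definition stable_part (G : graph) (P : pred (V G)) : Prop :=
  forall x y, P x -> P y -> ~~ adj x y.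

Definition clique_part (G : graph) (P : pred (V G)) : Prop :=
  forall x y, P x -> P y -> x != y -> adj x y.

(* H(s,t): vertex set partitioned into s stable sets (parts 0..s-1)
   and t cliques (parts s..s+t-1); parts may be empty. *)
Definition Hst (s t : nat) : family := fun G =>
  exists p : V G -> 'I_(s + t),
    forall i : 'I_(s + t),
      if (i < s)%N then stable_part (fun x => p x == i)
      else clique_part (fun x => p x == i).

Definition subfam (F1 F2 : family) : Prop := forall G, F1 G -> F2 G.

Definition chi_c_ok (F : family) (l : nat) : Prop :=
  exists2 s, (s <= l)%N & subfam (Hst s (l - s)) F.

Definition is_chi_c (F : family) (l : nat) : Prop :=
  chi_c_ok F l /\ forall l', chi_c_ok F l' -> (l' <= l)%N.

Definition part_embeds (G : graph) (P : pred (V G)) (J : graph) : Prop :=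
  exists f : V G -> V J,
    forall x y, P x -> P y -> (f x = f y -> x = y) /\ adj (f x) (f y) = adj x y.

Definition reduced (F : family) (J : graph) : Prop :=
  exists l, is_chi_c F l /\
  exists2 s, (s < l)%N &
    forall G (p : V G -> 'I_l),
      (forall i : 'I_l,
         if val i == 0%N then part_embeds (fun x => p x == i) J
         else if (val i <= s)%N then stable_part (fun x => p x == i)
         else clique_part (fun x => p x == i)) ->
      F G.

Definition star (s : nat) (G : graph) : Prop :=
  exists S : {set V G}, (#|S| <= s)%N /\
    (stable_part (fun x => x \notin S) \/ clique_part (fun x => x \notin S)) /\
    forall v, v \in S ->
      (forall x, x \notin S -> adj v x) \/ (forall x, x \notin S -> ~~ adj v x).

Definition critical_family (s : nat) (F : family) : Prop :=
  exists n0 : nat, forall K, reduced F K -> (n0 <= #|V K|)%N -> star s K.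

Definition critical (s : nat) (H : graph) : Prop := critical_family s (Forb H).

(* Main.v *)
Require Import Defs.
From mathcomp Require Import all_boot zify.
Set Implicit Arguments. Unset Strict Implicit. Unset Printing Implicit Defensive.

Definition e1M : seq (seq bool) := [:: [:: false; true; true; false; false; false; true; false; false];
 [:: true; false; true; false; false; true; false; false; true];
 [:: true; true; false; false; false; false; false; true; false];
 [:: false; false; false; false; true; true; false; false; true];
 [:: false; false; false; true; false; true; false; false; false];
 [:: false; true; false; true; true; false; true; false; true];
 [:: true; false; false; false; false; true; false; true; true];
 [:: false; false; true; false; false; false; true; false; true];
 [:: false; true; false; true; false; true; true; true; false]].
Definition e1n (a b : nat) : bool := nth false (nth [::] e1M a) b.

Lemma all9 (P : nat -> bool) : all P (iota 0 9) -> forall a : 'I_9, P a.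
Proof. by move=> /allP h a; apply: h; rewrite mem_iota /= add0n ltn_ord. Qed.

Lemma all99 (P : nat -> nat -> bool) :
  all (fun a => all (P a) (iota 0 9)) (iota 0 9) -> forall a b : 'I_9, P a b.
Proof. move=> h a b; move: (all9 h a) => h'; exact: (all9 h' b). Qed.

Lemma e1n_irr : forall a : 'I_9, e1n a a = false.
Proof.
move=> a; apply/negbTE; move: a.
by apply: (@all9 (fun a => ~~ e1n a a)); vm_compute.
Qed.

Definition VH (n : nat) : finType := ('I_9 + ('I_n.+1 * 'I_3))%type.

Definition Hadj n (x y : VH n) : bool :=
  match x, y with
  | inl a, inl b => e1n a b
  | inr (i, j), inr (i', j') => (i == i') && (j != j')
  | _, _ => false
  end.

Lemma e1n_sym : forall a b : 'I_9, e1n a b = e1n b a.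
Proof.
move=> a b; apply/eqP; move: a b.
by apply: (@all99 (fun a b => e1n a b == e1n b a)); vm_compute.
Qed.

Lemma Hadj_sym n : symmetric (@Hadj n).
Proof.
case=> [a|[i j]] [b|[i' j']] //=; first exact: e1n_sym.
by rewrite eq_sym [j' == j]eq_sym.
Qed.

Lemma Hadj_irr n : irreflexive (@Hadj n).
Proof. case=> [a|[i j]] /=; first exact: e1n_irr. by rewrite !eqxx. Qed.

Definition Hg n : graph := @Graph (VH n) (@Hadj n) (@Hadj_sym n) (@Hadj_irr n).

Lemma HstP (G : graph) s t (f : V G -> nat) :
  (forall x, f x < s + t) ->
  (forall x y, f x = f y -> f x < s -> ~~ adj x y) ->
  (forall x y, f x = f y -> s <= f x -> x != y -> adj x y) -> Hst s t G.
Proof.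
move=> hf hs hc; exists (fun x => Ordinal (hf x)) => i.
case: ifP => hi x y /eqP hx /eqP hy.
- apply: hs; first by rewrite -[f x]/(val (Ordinal (hf x))) hx -hy.
  by rewrite -[f x]/(val (Ordinal (hf x))) hx.
- apply: hc; first by rewrite -[f x]/(val (Ordinal (hf x))) hx -hy.
  by rewrite -[f x]/(val (Ordinal (hf x))) hx leqNgt hi.
Qed.

Lemma Hst_mono (G : graph) s t s' t' : s <= s' -> t <= t' -> Hst s t G -> Hst s' t' G.
Proof.
move=> hs ht [p hp].
pose g x := if nat_of_ord (p x) < s then nat_of_ord (p x) else nat_of_ord (p x) + (s' - s).
apply: (@HstP G s' t' g).
- move=> x; rewrite /g; have := ltn_ord (p x); case: ifP => h1 h2; lia.
- move=> x y; rewrite /g.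
  case: ifP => hx; case: ifP => hy => e lt; try lia.
  have ep : p x = p y by apply: val_inj.
  have := hp (p x); rewrite hx => /(_ x y (eqxx _)); rewrite ep eqxx; exact.
- move=> x y; rewrite /g.
  case: ifP => hx; case: ifP => hy => e lt; try lia.
  have ep : p x = p y by apply: val_inj => /=; lia.
  have := hp (p x); rewrite hx => /(_ x y (eqxx _)); rewrite ep eqxx; exact.
Qed.

Lemma part_embeds_ext (G J : graph) (P Q : pred (V G)) :
  (forall x, Q x -> P x) -> part_embeds P J -> part_embeds Q J.
Proof. by move=> hPQ [f hf]; exists f => x y /hPQ hx /hPQ hy; exact: hf. Qed.

Lemma pe_sub1 (G J : graph) (P : pred (V G)) (k0 : V J) :
  (forall x y, P x -> P y -> x = y) -> part_embeds P J.
Proof.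
move=> h; exists (fun _ => k0) => x y hx hy; split=> [_|]; first exact: h.
by rewrite (h x y hx hy) !(@adj_irr J) (@adj_irr G).
Qed.

Lemma condP (G J : graph) l s (f : V G -> nat) (hf : forall x, f x < l) :
  part_embeds (fun x => f x == 0) J ->
  (forall x y, f x = f y -> 0 < f x -> f x <= s -> ~~ adj x y) ->
  (forall x y, f x = f y -> s < f x -> x != y -> adj x y) ->
  forall i : 'I_l,
      if val i == 0 then part_embeds (fun x => (Ordinal (hf x)) == i) J
      else if (val i <= s) then stable_part (fun x => (Ordinal (hf x)) == i)
      else clique_part (fun x => (Ordinal (hf x)) == i).
Proof.
move=> h0 hs hc i.
have E : forall x, (Ordinal (hf x) == i) = (f x == val i).
  by move=> x; apply/eqP/eqP => [<-|h] //; apply: val_inj.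
case: ifP => [/eqP i0|hi0].
  by apply: part_embeds_ext h0 => x; rewrite E i0.
case: ifP => his x y; rewrite !E => /eqP hx /eqP hy.
- apply: hs; [by rewrite hx hy | by rewrite hx lt0n hi0 | by rewrite hx].
- by apply: hc; [rewrite hx hy | rewrite hx ltnNge his].
Qed.

Lemma star0_free (K : graph) :
  (forall a b c : V K, adj a b -> adj b c -> ~~ adj a c -> a != c -> False) ->
  (forall a b c : V K, adj a b -> ~~ adj a c -> ~~ adj b c -> c != a -> c != b -> False) ->
  star 0 K.
Proof.
move=> hP3 hK12; rewrite /star; exists (set0 : {set V K}); split; first by rewrite cards0.
split; last by move=> v; rewrite in_set0.
case: (boolP [exists u : V K, exists v : V K, adj u v]) => [/existsP[u /existsP[v huv]]|/existsPn hn]; last first.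
  by left=> x y _ _; have /existsPn := hn x; apply.
right.
have W : forall w, w != u -> w != v -> adj w u && adj w v.
  move=> w hwu hwv.
  case: (boolP (adj w u)) => hwu'; case: (boolP (adj w v)) => hwv' //=; exfalso.
  - exact: (hP3 w u v hwu' huv hwv' hwv).
  - by apply: (hP3 w v u hwv' _ hwu' hwu); rewrite (@adj_sym K).
  - by apply: (hK12 u v w huv _ _ hwu hwv); rewrite (@adj_sym K).
have uv : u != v by apply/negP => /eqP e; move: huv; rewrite e (@adj_irr K).
move=> x y _ _ hxy.
case: (eqVneq x u) => [exu|hxu].
  subst x.
  case: (eqVneq y v) => [->|hyv] //.
  have hyu : y != u by rewrite eq_sym.
  by have /andP[h _] := W y hyu hyv; rewrite (@adj_sym K).
case: (eqVneq x v) => [exv|hxv].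
  subst x.
  case: (eqVneq y u) => [->|hyu]; first by rewrite (@adj_sym K).
  have hyv : y != v by rewrite eq_sym.
  by have /andP[_ h] := W y hyu hyv; rewrite (@adj_sym K).
have /andP[hxu' hxv'] := W x hxu hxv.
case: (eqVneq y u) => [->|hyu] //.
case: (eqVneq y v) => [->|hyv] //.
have /andP[hyu' _] := W y hyu hyv.
case: (boolP (adj x y)) => // hn; exfalso.
by apply: (hP3 x u y) => //; rewrite (@adj_sym K).
Qed.

Lemma star1_free (K : graph) :
  (forall a b c : V K, adj a b -> adj b c -> adj a c -> False) ->
  (forall a b c : V K, adj a b -> ~~ adj a c -> ~~ adj b c -> c != a -> c != b -> False) ->
  (forall a b c d : V K, adj a b -> adj b c -> adj c d -> adj d a ->
        ~~ adj a c -> ~~ adj b d -> a != c -> b != d -> False) ->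
  star 1 K.
Proof.
move=> hT hK12 hC4.
case: (boolP [exists u : V K, exists v : V K, adj u v]) => [/existsP[u /existsP[v huv]]|/existsPn hn]; last first.
  exists (set0 : {set V K}); split; first by rewrite cards0.
  split; last by move=> w; rewrite in_set0.
  by left=> x y _ _; have /existsPn := hn x; apply.
have nuv : u != v by apply/negP => /eqP e; move: huv; rewrite e (@adj_irr K).
have W1 : forall w, w != u -> w != v -> adj w u || adj w v.
  move=> w h1 h2; case: (boolP (adj w u)) => //= a1; case: (boolP (adj w v)) => //= a2.
  by exfalso; apply: (hK12 u v w) huv _ _ h1 h2; rewrite (@adj_sym K).
have Hc : forall c : V K, (forall x : V K, x != c -> adj x c) -> star 1 K.
  move=> c hc; rewrite /star; exists [set c]; split; first by rewrite cards1.
  split.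
    left=> x y; rewrite !in_set1 => hx hy; apply/negP => hxy.
    by apply: (hT x y c) hxy (hc y hy) (hc x hx).
  move=> w; rewrite in_set1 => /eqP ->; left=> x; rewrite in_set1 => hx.
  by rewrite (@adj_sym K); apply: hc.
case: (boolP [exists x : V K, (x != u) && ~~ adj x u]) => [/existsP[x /andP[hxu hxu']]|/existsPn hnx]; last first.
  by apply: (Hc u) => x hx; have := hnx x; rewrite hx /= negbK.
case: (boolP [exists y : V K, (y != v) && ~~ adj y v]) => [/existsP[y /andP[hyv hyv']]|/existsPn hny]; last first.
  by apply: (Hc v) => y hy; have := hny y; rewrite hy /= negbK.
exfalso.
have hxv : x != v by apply/negP => /eqP e; move: hxu'; rewrite e (@adj_sym K) huv.
have hyu : y != u by apply/negP => /eqP e; move: hyv'; rewrite e huv.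
have axv : adj x v by have := W1 x hxu hxv; rewrite (negbTE hxu').
have ayu : adj y u by have := W1 y hyu hyv; rewrite (negbTE hyv') orbF.
have hxy : y != x by apply/negP => /eqP e; move: hxu'; rewrite -e ayu.
have axy : adj x y.
  case: (boolP (adj x y)) => // hn; exfalso.
  by apply: (hK12 x v y) axv hn _ hxy hyv; rewrite (@adj_sym K).
apply: (hC4 u v x y) huv _ axy ayu _ _ _ _.
- by rewrite (@adj_sym K).
- by rewrite (@adj_sym K).
- by rewrite (@adj_sym K).
- by rewrite eq_sym.
- by rewrite eq_sym.
Qed.

Fixpoint allbl (n : nat) : seq (seq bool) :=
  if n is n'.+1 then [seq b :: s | b <- [:: true; false], s <- allbl n'] else [:: [::]].

Definition I9 := iota 0 9.
Definition indepS (m : nat -> bool) (c : nat) : bool :=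
  all (fun x => all (fun y => (m x && m y && (x != c) && (y != c)) ==> ~~ e1n x y) I9) I9.
Definition starlikeS (s : seq bool) : bool :=
  let m a := nth false s a in
  indepS m 9 ||
  has (fun c => m c && indepS m c && all (fun x => (m x && (x != c)) ==> e1n c x) I9) I9.
Definition goodS (s : seq bool) : bool :=
  let m a := nth false s a in
  has (fun a => has (fun b => has (fun c => ~~ m a && ~~ m b && ~~ m c && (a != b) && (a != c) && (b != c) && ~~ e1n a b && ~~ e1n a c && ~~ e1n b c) I9) I9) I9.

Lemma bigcheck : all (fun s => starlikeS s ==> goodS s) (allbl 9).
Proof. Time vm_compute. reflexivity. Qed.

Lemma mem_allbl n (s : seq bool) : size s = n -> s \in allbl n.
Proof.
elim: n s => [|n IH] [|b s] //= [hs].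
rewrite !mem_cat; case: b.
  by rewrite (map_f (fun s0 => true :: s0) (IH s hs)).
by rewrite (map_f (fun s0 => false :: s0) (IH s hs)) orbT.
Qed.

Definition sP (P : pred 'I_9) : seq bool := [seq P (inord a) | a <- iota 0 9].

Lemma nth_sP P (a : nat) : a < 9 -> nth false (sP P) a = P (inord a).
Proof. by move=> ha; rewrite /sP (nth_map 0) ?size_iota // nth_iota. Qed.

Lemma inI9 (a : nat) : (a \in I9) = (a < 9).
Proof. by rewrite /I9 mem_iota. Qed.

Definition starlikeH n (A : pred (VH n)) : Prop :=
  (forall x y, A x -> A y -> ~~ Hadj x y) \/
  (exists c, A c /\ (forall x y, A x -> A y -> x != c -> y != c -> ~~ Hadj x y)
             /\ (forall x, A x -> x != c -> Hadj c x)).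

Lemma e1n_inord (x y : nat) : x < 9 -> y < 9 -> e1n (@inord 8 x) (@inord 8 y) = e1n x y.
Proof. by move=> hx hy; rewrite !inordK. Qed.

Lemma starlike_E n (A : pred (VH n)) :
  starlikeH A -> starlikeS (sP (fun a => A (inl a))).
Proof.
rewrite /starlikeS.
have Hind : (forall a b : 'I_9, A (inl a) -> A (inl b) -> ~~ e1n a b) ->
    indepS (fun a => nth false (sP (fun a => A (inl a))) a) 9.
  move=> h; apply/allP => x; rewrite inI9 => hx; apply/allP => y; rewrite inI9 => hy.
  rewrite !nth_sP //; apply/implyP => /andP[/andP[/andP[ax ay] _] _].
  by have := h _ _ ax ay; rewrite !inordK.
case=> [hi|[[c0|[j k]] [hc [hi hadj]]]].
- by rewrite Hind // => a b ha hb; exact: (hi (inl a) (inl b)).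
- apply/orP; right; apply/hasP; exists (nat_of_ord c0); first by rewrite inI9 ltn_ord.
  rewrite nth_sP // inord_val hc andTb; apply/andP; split.
    apply/allP => x; rewrite inI9 => hx; apply/allP => y; rewrite inI9 => hy.
    rewrite !nth_sP //; apply/implyP => /andP[/andP[/andP[ax ay] xc] yc].
    have xc' : inl (inord x) != inl c0 :> VH n.
      by apply/negP => /eqP [] /(congr1 (@nat_of_ord 9)); rewrite inordK // => e; move: xc; rewrite e eqxx.
    have yc' : inl (inord y) != inl c0 :> VH n.
      by apply/negP => /eqP [] /(congr1 (@nat_of_ord 9)); rewrite inordK // => e; move: yc; rewrite e eqxx.
    by have := hi _ _ ax ay xc' yc'; rewrite /= !inordK.
  apply/allP => x; rewrite inI9 => hx; rewrite nth_sP //; apply/implyP => /andP[ax xc].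
  have xc' : inl (inord x) != inl c0 :> VH n.
    by apply/negP => /eqP [] /(congr1 (@nat_of_ord 9)); rewrite inordK // => e; move: xc; rewrite e eqxx.
  by have := hadj _ ax xc'; rewrite /= inordK.
- rewrite Hind // => a b ha; exfalso.
  by have := hadj (inl a) ha isT.
Qed.

Lemma triple_of n (A : pred (VH n)) : starlikeH A ->
  exists a1 a2 a3 : 'I_9, [/\ ~~ A (inl a1), ~~ A (inl a2), ~~ A (inl a3),
     [/\ a1 != a2, a1 != a3 & a2 != a3] & [/\ ~~ e1n a1 a2, ~~ e1n a1 a3 & ~~ e1n a2 a3]].
Proof.
move=> /starlike_E hs.
have := allP bigcheck _ (mem_allbl (size_map _ _ : size (sP (fun a => A (inl a))) = 9)).
rewrite hs /= /goodS => /hasP[a ha /hasP[b hb /hasP[c hc]]].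
rewrite !inI9 in ha hb hc.
rewrite !nth_sP // => /andP[/andP[/andP[/andP[/andP[/andP[/andP[/andP[h1 h2] h3] dab] dac] dbc] n1] n2] n3].
exists (inord a), (inord b), (inord c); split => //.
- by split; apply/negP => /eqP /(congr1 (@nat_of_ord 9)); rewrite !inordK // => /eqP; apply/negP.
- by split; rewrite !inordK.
Qed.

Definition o0 : 'I_3 := @Ordinal 3 0 isT.
Definition o1 : 'I_3 := @Ordinal 3 1 isT.
Definition o2 : 'I_3 := @Ordinal 3 2 isT.

Lemma comp_free n (A : pred (VH n)) (hA : starlikeH A) (j : 'I_n.+1) :
  exists k : 'I_3, ~~ A (inr (j, k)).
Proof.
case: (boolP [exists k : 'I_3, ~~ A (inr (j, k))]) => [/existsP //|/existsPn hall]; exfalso.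
have hin : forall k, A (inr (j, k)) by move=> k; have := hall k; rewrite negbK.
have adjk : forall k k', k != k' -> Hadj (inr (j, k)) (inr (j, k') : VH n).
  by move=> k k' hk; rewrite /= eqxx.
case: hA => [hi|[c [hc [hi _]]]].
  by have := hi _ _ (hin o0) (hin o1); rewrite adjk.
have [k [k' [hkk [hk hk']]]] : exists k k' : 'I_3, [/\ k != k', inr (j, k) != c & inr (j, k') != c].
  case: (eqVneq (inr (j, o0) : VH n) c) => [e0|n0].
    exists o1, o2; split => //; rewrite -e0; apply/negP => /eqP [] //.
  case: (eqVneq (inr (j, o1) : VH n) c) => [e1|n1].
    exists o0, o2; split => //; rewrite -e1; apply/negP => /eqP [] //.
  by exists o0, o1.
by have := hi _ _ (hin k) (hin k') hk hk'; rewrite adjk.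
Qed.

Lemma key n (A : pred (VH n)) (q : VH n -> nat) :
  starlikeH A -> (forall x, ~~ A x -> 0 < q x < n.+4) ->
  (forall x y, ~~ A x -> ~~ A y -> x != y -> q x = q y -> Hadj x y) -> False.
Proof.
move=> hA hq hc.
have [a1 [a2 [a3 [h1 h2 h3 [d12 d13 d23] [n12 n13 n23]]]]] := triple_of hA.
pose tri (i : 'I_3) := nth a1 [:: a1; a2; a3] i.
pose kf (j : 'I_n.+1) := xchoose (comp_free hA j).
have hkf : forall j, ~~ A (inr (j, kf j)) by move=> j; exact: (xchooseP (comp_free hA j)).
pose w (u : 'I_3 + 'I_n.+1) : VH n := match u with inl i => inl (tri i) | inr j => inr (j, kf j) end.
have wA : forall u, ~~ A (w u).
  case=> [i|j] /=; last exact: hkf.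
  by case: i => [[|[|[|m]]] hm] //=.
have tri_ok : forall i i' : 'I_3, i != i' -> (tri i != tri i') && ~~ e1n (tri i) (tri i').
  move=> i i'; case: i => [[|[|[|m]]] hm]; case: i' => [[|[|[|m']]] hm'] // _; rewrite /tri /=.
  - by rewrite d12 n12.
  - by rewrite d13 n13.
  - by rewrite eq_sym d12 e1n_sym n12.
  - by rewrite d23 n23.
  - by rewrite eq_sym d13 e1n_sym n13.
  - by rewrite eq_sym d23 e1n_sym n23.
have W : forall u v, u != v -> (w u != w v) && ~~ Hadj (w u) (w v).
  case=> [i|j] [i'|j'] huv; apply/andP; split => //.
  - have hii : i != i' by apply/negP => /eqP e; move: huv; rewrite e eqxx.
    have /andP[ht he] := tri_ok i i' hii.
    by apply/negP => /eqP [] e; move: ht; rewrite e eqxx.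
  - have hii : i != i' by apply/negP => /eqP e; move: huv; rewrite e eqxx.
    by have /andP[ht he] := tri_ok i i' hii.
  - have hjj : j != j' by apply/negP => /eqP e; move: huv; rewrite e eqxx.
    by apply/negP => /eqP [] e _; move: hjj; rewrite e eqxx.
  - have hjj : j != j' by apply/negP => /eqP e; move: huv; rewrite e eqxx.
    by rewrite /= (negbTE hjj).
pose g (u : 'I_3 + 'I_n.+1) : 'I_n.+3 := inord (q (w u)).-1.
have ginj : injective g.
  move=> u v e.
  have /andP[qu1 qu2] := hq _ (wA u).
  have /andP[qv1 qv2] := hq _ (wA v).
  have e1 := congr1 (@nat_of_ord n.+3) e.
  rewrite /g inordK in e1; last by rewrite prednK // -ltnS.
  rewrite inordK in e1; last by rewrite prednK // -ltnS.
  have e2 : q (w u) = q (w v) by rewrite -(prednK qu1) -(prednK qv1) e1.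
  case: (eqVneq u v) => [//|huv].
  have /andP[hne hna] := W u v huv.
  by move: hna; rewrite (hc _ _ (wA u) (wA v) hne e2).
have := @leq_card _ _ g ginj; rewrite card_sum !card_ord.
by rewrite addSn !addnS ltnn.
Qed.

Definition lab (g : seq nat) (a : nat) : nat := nth 0 g a.

Definition chkR (g : seq nat) (s m : nat) : bool :=
  all (fun a => (lab g a < m) && all (fun b =>
     ((lab g a == lab g b) && (0 < lab g a)) ==>
       (if lab g a <= s then ~~ e1n a b else (a != b) ==> e1n a b)) I9) I9.

Lemma chkR_ok g s m : chkR g s m ->
  [/\ forall a : 'I_9, lab g a < m,
      forall a b : 'I_9, lab g a = lab g b -> 0 < lab g a -> lab g a <= s -> ~~ e1n a b &
      forall a b : 'I_9, lab g a = lab g b -> s < lab g a -> a != b -> e1n a b].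
Proof.
move=> h.
have H := @all99 (fun a b => (lab g a < m) && (((lab g a == lab g b) && (0 < lab g a)) ==>
       (if lab g a <= s then ~~ e1n a b else (a != b) ==> e1n a b))).
have {}H : forall a b : 'I_9, (lab g a < m) && (((lab g a == lab g b) && (0 < lab g a)) ==>
       (if lab g a <= s then ~~ e1n a b else (a != b) ==> e1n a b)).
  apply: H; apply/allP => a ha; apply/allP => b hb.
  have /andP[h1 /allP h2] := allP h a ha.
  by rewrite h1 (h2 b hb).
split.
- by move=> a; have /andP[] := H a a.
- move=> a b e p le; have /andP[_ /implyP hi] := H a b.
  by move: hi; rewrite -e eqxx p le => /(_ isT).
- move=> a b e lt ne; have /andP[_ /implyP hi] := H a b.
  move: hi; rewrite -e eqxx (leq_ltn_trans (leq0n s) lt) leqNgt lt /= => /(_ isT) /implyP.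
  by apply.
Qed.

Definition fH n (g : seq nat) (h : 'I_n.+1 -> 'I_3 -> nat) (x : VH n) : nat :=
  match x with inl a => lab g a | inr (j, k) => h j k end.

Lemma forbHH n : ~ Forb (Hg n) (Hg n).
Proof. by apply; exists id; split. Qed.

Lemma useH n (J : graph) (l s : nat) (g : seq nat) (h : 'I_n.+1 -> 'I_3 -> nat)
  (R : forall p : V (Hg n) -> 'I_l,
     (forall i : 'I_l, if val i == 0 then part_embeds (fun x : V (Hg n) => p x == i) J
        else if val i <= s then stable_part (fun x : V (Hg n) => p x == i)
        else clique_part (fun x : V (Hg n) => p x == i)) -> Forb (Hg n) (Hg n)) :
  (forall a : 'I_9, lab g a < l) ->
  (forall a b : 'I_9, lab g a = lab g b -> 0 < lab g a -> lab g a <= s -> ~~ e1n a b) ->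
  (forall a b : 'I_9, lab g a = lab g b -> s < lab g a -> a != b -> e1n a b) ->
  (forall j k, h j k < l) ->
  (forall j k j' k', h j k = h j' k' -> 0 < h j k -> h j k <= s -> ~~ Hadj (inr (j, k)) (inr (j', k') : VH n)) ->
  (forall j k j' k', h j k = h j' k' -> s < h j k -> (j, k) != (j', k') -> Hadj (inr (j, k)) (inr (j', k') : VH n)) ->
  (forall (a : 'I_9) j k, lab g a = h j k -> 0 < h j k -> h j k <= s) ->
  part_embeds (fun x : V (Hg n) => fH g h x == 0) J -> False.
Proof.
move=> b1 b2 b3 hb hs hc hm h0.
have hf : forall x : V (Hg n), fH g h x < l.
  by case=> [a|[j k]] /=; [exact: b1 | exact: hb].
apply: (forbHH (n := n)); apply: (R (fun x => Ordinal (hf x))).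
apply: condP => //.
- case=> [a|[j k]] [b|[j' k']] /= e p le.
  + exact: b2.
  + by [].
  + by [].
  + exact: hs.
- case=> [a|[j k]] [b|[j' k']] /= e lt ne.
  + exact: b3.
  + by have := hm a j' k' e; rewrite -e => /(_ (leq_ltn_trans (leq0n s) lt)); rewrite leqNgt lt.
  + by have := hm b j k (esym e) (leq_ltn_trans (leq0n s) lt); rewrite leqNgt lt.
  + exact: hc.
Qed.

Definition chkS (g : seq nat) (s t : nat) : bool :=
  all (fun a => (lab g a < s + t) && all (fun b =>
     (lab g a == lab g b) ==> (if lab g a < s then ~~ e1n a b else (a != b) ==> e1n a b)) I9) I9.

Lemma chkS_ok g s t : chkS g s t ->
  [/\ forall a : 'I_9, lab g a < s + t,
      forall a b : 'I_9, lab g a = lab g b -> lab g a < s -> ~~ e1n a b &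
      forall a b : 'I_9, lab g a = lab g b -> s <= lab g a -> a != b -> e1n a b].
Proof.
move=> h.
have H := @all99 (fun a b => (lab g a < s + t) && ((lab g a == lab g b) ==>
       (if lab g a < s then ~~ e1n a b else (a != b) ==> e1n a b))).
have {}H : forall a b : 'I_9, (lab g a < s + t) && ((lab g a == lab g b) ==>
       (if lab g a < s then ~~ e1n a b else (a != b) ==> e1n a b)).
  apply: H; apply/allP => a ha; apply/allP => b hb.
  have /andP[h1 /allP h2] := allP h a ha.
  by rewrite h1 (h2 b hb).
split.
- by move=> a; have /andP[] := H a a.
- move=> a b e lt; have /andP[_ /implyP hi] := H a b.
  by move: hi; rewrite -e eqxx lt => /(_ isT).
- move=> a b e le ne; have /andP[_ /implyP hi] := H a b.
  move: hi; rewrite -e eqxx ltnNge le /= => /(_ isT) /implyP.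
  by apply.
Qed.

Lemma HstH n s t (g : seq nat) (h : 'I_n.+1 -> 'I_3 -> nat) :
  (forall a : 'I_9, lab g a < s + t) ->
  (forall a b : 'I_9, lab g a = lab g b -> lab g a < s -> ~~ e1n a b) ->
  (forall a b : 'I_9, lab g a = lab g b -> s <= lab g a -> a != b -> e1n a b) ->
  (forall j k, h j k < s + t) ->
  (forall j k j' k', h j k = h j' k' -> h j k < s -> ~~ Hadj (inr (j, k)) (inr (j', k') : VH n)) ->
  (forall j k j' k', h j k = h j' k' -> s <= h j k -> (j, k) != (j', k') -> Hadj (inr (j, k)) (inr (j', k') : VH n)) ->
  (forall (a : 'I_9) j k, lab g a = h j k -> lab g a < s) -> Hst s t (Hg n).
Proof.
move=> b1 b2 b3 hb hs hc hm.
apply: (@HstP (Hg n) s t (fH g h)).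
- by case=> [a|[j k]] /=; [exact: b1 | exact: hb].
- case=> [a|[j k]] [b|[j' k']] /= e lt.
  + exact: b2.
  + by [].
  + by [].
  + exact: hs.
- case=> [a|[j k]] [b|[j' k']] /= e le ne.
  + exact: b3.
  + by have := hm a j' k' e; rewrite ltnNge le.
  + by have := hm b j k (esym e); rewrite -e ltnNge le.
  + exact: hc.
Qed.

Definition t0 : seq nat := [:: 0;0;0;1;1;1;2;2;2].
Definition t2 : seq nat := [:: 1;2;0;0;1;2;0;1;2].
Definition tc : seq nat := [:: 0;1;2;1;2;0;1;0;2].

Lemma ord3_2 (k : 'I_3) : 2 <= k -> k = o2.
Proof. by move=> hk; apply: val_inj => /=; have := ltn_ord k; lia. Qed.

Lemma Hst0 n : Hst 0 n.+4 (Hg n).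
Proof.
have /chkS_ok [b1 b2 b3] : chkS t0 0 3 by vm_compute.
apply: (@HstH n 0 n.+4 t0 (fun j k => 3 + j)) => //.
- by move=> a; have := b1 a; lia.
- by move=> j k; have := ltn_ord j; lia.
- move=> j k j' k' e _ ne /=.
  have ejj : j = j' by apply: val_inj => /=; lia.
  subst j'; rewrite eqxx /=; apply/negP => /eqP ekk; move: ne; rewrite ekk eqxx.
  by [].
- by move=> a j k e; have := b1 a; lia.
Qed.

Lemma Hst2 n : Hst 2 n.+2 (Hg n).
Proof.
have /chkS_ok [b1 b2 b3] : chkS t2 2 1 by vm_compute.
apply: (@HstH n 2 n.+2 t2 (fun j k => if nat_of_ord k < 2 then nat_of_ord k else 3 + j)) => //.
- by move=> a; have := b1 a; lia.
- by move=> j k; case: ifP => _; have := ltn_ord j; have := ltn_ord k; lia.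
- move=> j k j' k'; case: ifP => hk; case: ifP => hk' e lt //=; try lia.
  have ekk : k = k' by apply: val_inj.
  by rewrite ekk eqxx andbF.
- move=> j k j' k'; case: ifP => hk; case: ifP => hk' e le ne; try lia.
  have ejj : j = j' by apply: val_inj => /=; lia.
  have hk2 : k = o2 by apply: ord3_2; lia.
  have hk2' : k' = o2 by apply: ord3_2; lia.
  have ekk : k = k' by rewrite hk2 hk2'.
  by move: ne; rewrite ejj ekk eqxx.
- move=> a j k; case: ifP => hk e; first by lia.
  by have := b1 a; lia.
Qed.

Lemma Hst3 n : Hst 3 0 (Hg n).
Proof.
have /chkS_ok [b1 b2 b3] : chkS tc 3 0 by vm_compute.
apply: (@HstH n 3 0 tc (fun j k => nat_of_ord k) b1 b2 b3).
- by move=> j k /=; have := ltn_ord k; lia.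
- move=> j k j' k' e _ /=.
  have ekk : k = k' by apply: val_inj.
  by rewrite ekk eqxx andbF.
- by move=> j k j' k' /= _ le; have := ltn_ord k; lia.
- by move=> a j k /= _; have := b1 a; lia.
Qed.

Lemma notin n (G : graph) : Hst 1 n.+3 G -> ~ embeds (Hg n) G.
Proof.
move=> [p hp] [e [einj eadj]].
apply: (@key n (fun x => nat_of_ord (p (e x)) == 0) (fun x => nat_of_ord (p (e x)))).
- left=> x y /eqP hx /eqP hy.
  have := hp (p (e x)); rewrite hx /= => /(_ (e x) (e y) (eqxx _)).
  have -> : p (e y) == p (e x) by apply/eqP; apply: val_inj => /=; rewrite hx hy.
  by move=> /(_ isT); rewrite eadj.
- by move=> x hx; rewrite lt0n hx /= ltn_ord.
- move=> x y hx hy hxy eq.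
  have epq : p (e y) = p (e x) by apply: val_inj.
  have := hp (p (e x)); rewrite ltnNge lt0n hx /= => /(_ (e x) (e y) (eqxx _)).
  rewrite epq eqxx => /(_ isT).
  have hne : e x != e y by apply/negP => /eqP /einj /eqP; apply/negP.
  by move=> /(_ hne); rewrite eadj.
Qed.

Lemma chi n : is_chi_c (Forb (Hg n)) n.+4.
Proof.
split.
  exists 1 => // G hG; exact: (@notin n G hG).
move=> l' [s hs hsub]; rewrite leqNgt; apply/negP => hl.
have hH : Hst s (l' - s) (Hg n).
  case: s hs hsub => [|[|[|s]]] hs hsub.
  - by apply: (Hst_mono _ _ (Hst0 n)) => //; lia.
  - by apply: (Hst_mono _ _ (Hst0 n)) => //; lia.
  - by apply: (Hst_mono _ _ (Hst2 n)) => //; lia.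
  - by apply: (Hst_mono _ _ (Hst3 n)) => //; lia.
exact: (forbHH (hsub _ hH)).
Qed.

Lemma pe_list (G J : graph) (P : pred (V G)) (xs : seq (V G)) (ks : seq (V J)) (x0 : V G) (k0 : V J) :
  (forall x, P x -> x \in xs) -> uniq ks -> size ks = size xs ->
  (forall i j, i < size xs -> j < size xs -> adj (nth k0 ks i) (nth k0 ks j) = adj (nth x0 xs i) (nth x0 xs j)) ->
  part_embeds P J.
Proof.
move=> hP hu hs hadj.
exists (fun x => nth k0 ks (index x xs)) => x y /hP hx /hP hy; split.
- move=> e.
  have ei : index x xs = index y xs.
    apply/eqP; rewrite -(nth_uniq k0 _ _ hu) ?e // hs index_mem //.
  by rewrite -(nth_index x0 hx) -(nth_index x0 hy) ei.
- by rewrite hadj ?index_mem // !nth_index.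
Qed.

Lemma pe_E1 n (J : graph) (g : seq nat) (h : 'I_n.+1 -> 'I_3 -> nat) (zs : seq nat) (ks : seq (V J)) (k0 : V J) :
  all (fun a => (lab g a == 0) ==> (a \in zs)) I9 -> all (fun z => z < 9) zs ->
  (forall j k, h j k != 0) -> uniq ks -> size ks = size zs ->
  (forall i j, i < size zs -> j < size zs -> adj (nth k0 ks i) (nth k0 ks j) = e1n (nth 0 zs i) (nth 0 zs j)) ->
  part_embeds (fun x : V (Hg n) => fH g h x == 0) J.
Proof.
move=> hz hz9 hh hu hs hadj.
apply: (@pe_list (Hg n) J _ [seq inl (inord z) | z <- zs] ks (inl ord0) k0).
- case=> [a|[j k]] /=; last by rewrite (negbTE (hh j k)).
  move=> ha; have := allP hz a; rewrite inI9 ltn_ord ha => /(_ isT) /= hza.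
  by rewrite -(inord_val a); apply: (map_f (fun z => inl (inord z) : VH n)).
- exact: hu.
- by rewrite size_map.
- rewrite size_map => i j hi hj.
  rewrite (nth_map 0) // (nth_map 0) //= hadj //.
  have hzi := allP hz9 _ (mem_nth 0 hi); have hzj := allP hz9 _ (mem_nth 0 hj).
  by rewrite !inordK.
Qed.

Definition RedH n (K : graph) (s : nat) :=
  forall p : V (Hg n) -> 'I_n.+4,
    (forall i : 'I_n.+4, if val i == 0 then part_embeds (fun x : V (Hg n) => p x == i) K
        else if val i <= s then stable_part (fun x : V (Hg n) => p x == i)
        else clique_part (fun x : V (Hg n) => p x == i)) -> Forb (Hg n) (Hg n).

Lemma e1n_symn (a b : nat) : a < 9 -> b < 9 -> e1n a b = e1n b a.
Proof. by move=> ha hb; have := e1n_sym (inord a) (inord b); rewrite !inordK. Qed.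

Lemma e1n_irrn (a : nat) : a < 9 -> e1n a a = false.
Proof. by move=> ha; have := e1n_irr (inord a); rewrite inordK. Qed.

Lemma sym_cond (J : graph) (ks : seq (V J)) (k0 : V J) (zs : seq nat) :
  size ks = size zs -> all (fun z => z < 9) zs ->
  (forall i j, i < j -> j < size zs -> adj (nth k0 ks i) (nth k0 ks j) = e1n (nth 0 zs i) (nth 0 zs j)) ->
  forall i j, i < size zs -> j < size zs -> adj (nth k0 ks i) (nth k0 ks j) = e1n (nth 0 zs i) (nth 0 zs j).
Proof.
move=> hs hz h i j hi hj.
have hzi := allP hz _ (mem_nth 0 hi); have hzj := allP hz _ (mem_nth 0 hj).
case: (ltngtP i j) => [lt|gt|->].
- exact: h.
- by rewrite (@adj_sym J) e1n_symn //; apply: h.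
- by rewrite (@adj_irr J) e1n_irrn.
Qed.

Lemma adj_neq (J : graph) (x y : V J) : adj x y -> x != y.
Proof. by move=> h; apply/negP => /eqP e; move: h; rewrite e (@adj_irr J). Qed.

Lemma lev0 n (K : graph) (R : RedH n K 0) (g : seq nat) (zs : seq nat) (ks : seq (V K)) (k0 : V K) :
  chkR g 0 3 -> all (fun a => (lab g a == 0) ==> (a \in zs)) I9 -> all (fun z => z < 9) zs ->
  uniq ks -> size ks = size zs ->
  (forall i j, i < j -> j < size zs -> adj (nth k0 ks i) (nth k0 ks j) = e1n (nth 0 zs i) (nth 0 zs j)) -> False.
Proof.
move=> /chkR_ok [b1 b2 b3] hz hz9 hu hs hadj.
apply: (@useH n K n.+4 0 g (fun j k => 3 + j) R).
- by move=> a; have := b1 a; lia.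
- exact: b2.
- exact: b3.
- by move=> j k /=; have := ltn_ord j; lia.
- by move=> j k j' k' /= _ p le; lia.
- move=> j k j' k' /= e _ ne.
  have ejj : j = j' by apply: val_inj => /=; lia.
  subst j'; rewrite eqxx /=; apply/negP => /eqP ekk; move: ne; rewrite ekk eqxx.
  by [].
- by move=> a j k /= e; have := b1 a; lia.
- apply: (@pe_E1 n K g _ zs ks k0) => //.
  exact: sym_cond.
Qed.

Lemma lev1 n (K : graph) (R : RedH n K 1) (g : seq nat) (zs : seq nat) (ks : seq (V K)) (k0 : V K) :
  chkR g 1 3 -> all (fun a => (lab g a == 0) ==> (a \in zs)) I9 -> all (fun z => z < 9) zs ->
  uniq ks -> size ks = size zs ->
  (forall i j, i < j -> j < size zs -> adj (nth k0 ks i) (nth k0 ks j) = e1n (nth 0 zs i) (nth 0 zs j)) -> False.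
Proof.
move=> /chkR_ok [b1 b2 b3] hz hz9 hu hs hadj.
apply: (@useH n K n.+4 1 g (fun j k => if k == o0 then 1 else 3 + j) R).
- by move=> a; have := b1 a; lia.
- exact: b2.
- exact: b3.
- by move=> j k /=; case: ifP => _; have := ltn_ord j; lia.
- move=> j k j' k' /=; case: ifP => hk; case: ifP => hk' e p le //; try lia.
  by rewrite (eqP hk) (eqP hk') eqxx andbF.
- move=> j k j' k' /=; case: ifP => hk; case: ifP => hk' e lt ne //; try lia.
  have ejj : j = j' by apply: val_inj => /=; lia.
  subst j'; rewrite eqxx /=; apply/negP => /eqP ekk; move: ne; rewrite ekk eqxx.
  by [].
- by move=> a j k /=; case: ifP => _ e; have := b1 a; lia.
- apply: (@pe_E1 n K g _ zs ks k0) => //.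
    by move=> j k /=; case: ifP.
  exact: sym_cond.
Qed.

Definition g2 : seq nat := [:: 2;3;1;1;2;3;1;2;3].
Definition g3 : seq nat := [:: 1;2;3;2;3;1;2;1;3].

Lemma lab_nz g : all (fun a => lab g a != 0) I9 -> forall a : 'I_9, lab g a != 0.
Proof. by move=> h; apply: (@all9 (fun a => lab g a != 0)). Qed.

Lemma lev2 n (K : graph) (R : RedH n K 2) (k0 : V K) : False.
Proof.
have /chkR_ok [b1 b2 b3] : chkR g2 2 4 by vm_compute.
have nz : forall a : 'I_9, lab g2 a != 0 by apply: lab_nz; vm_compute.
pose h (j : 'I_n.+1) (k : 'I_3) := if nat_of_ord j == 0 then (if nat_of_ord k == 0 then 0 else nat_of_ord k)
                     else (if nat_of_ord k < 2 then (nat_of_ord k).+1 else 3 + j).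
have hk3 : forall k : 'I_3, nat_of_ord k < 3 by move=> k; exact: ltn_ord.
have hjn : forall j : 'I_n.+1, nat_of_ord j < n.+1 by move=> j; exact: ltn_ord.
apply: (@useH n K n.+4 2 g2 h R).
- by move=> a; have := b1 a; lia.
- exact: b2.
- exact: b3.
- by move=> j k; rewrite /h; have := hk3 k; have := hjn j; case: ifP => _; case: ifP => _; lia.
- move=> j k j' k' e p le /=; apply/negP => /andP[/eqP ejj hkk]; subst j'.
  have ekk : k = k'.
    apply: val_inj => /=; move: e p le; rewrite /h; have := hk3 k; have := hk3 k'.
    by case: ifP => ?; case: ifP => ?; case: ifP => ?; lia.
  by move: hkk; rewrite ekk eqxx.
- move=> j k j' k' e lt ne.
  have [ejj ekk] : nat_of_ord j = j' /\ nat_of_ord k = k'.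
    move: e lt; rewrite /h; have := hk3 k; have := hk3 k'; have := hjn j; have := hjn j'.
    by case: ifP => ?; case: ifP => ?; case: ifP => ?; case: ifP => ?; lia.
  by move: ne; rewrite (val_inj ejj) (val_inj ekk) eqxx.
- move=> a j k e p; move: e p; rewrite /h; have := b1 a; have := hk3 k; have := hjn j.
  by case: ifP => ?; case: ifP => ?; lia.
- apply: (@pe_sub1 (Hg n) K _ k0).
  case=> [a|[j k]] [b|[j' k']] /=.
  + by rewrite (negbTE (nz a)).
  + by rewrite (negbTE (nz a)).
  + by rewrite (negbTE (nz b)).
  + move=> e1 e2.
    have [ej ek ej' ek'] : [/\ nat_of_ord j = 0, nat_of_ord k = 0, nat_of_ord j' = 0 & nat_of_ord k' = 0].
      move: e1 e2; rewrite /h.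
      by case: ifP => ?; case: ifP => ?; case: ifP => ?; case: ifP => ?; split; lia.
    have -> : j = j' by apply: val_inj; rewrite /= ej ej'.
    by have -> : k = k' by apply: val_inj; rewrite /= ek ek'.
Qed.

Lemma lev3 n (K : graph) s (hs : 3 <= s) (R : RedH n K s) (k0 : V K) : False.
Proof.
have /chkR_ok [b1 b2 b3] : chkR g3 3 4 by vm_compute.
have nz : forall a : 'I_9, lab g3 a != 0 by apply: lab_nz; vm_compute.
have hk3 : forall k : 'I_3, nat_of_ord k < 3 by move=> k; exact: ltn_ord.
apply: (@useH n K n.+4 s g3 (fun j k => (nat_of_ord k).+1) R).
- by move=> a; have := b1 a; lia.
- by move=> a b e p le; apply: b2 => //; have := b1 a; lia.
- by move=> a b e lt; have := b1 a; lia.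
- by move=> j k /=; have := hk3 k; lia.
- move=> j k j' k' /= e _ _.
  have ekk : k = k' by apply: val_inj => /=; lia.
  by rewrite ekk eqxx andbF.
- by move=> j k j' k' /= e lt; have := hk3 k; lia.
- by move=> a j k /= e _; have := hk3 k; lia.
- apply: (@pe_sub1 (Hg n) K _ k0).
  case=> [a|[j k]] [b|[j' k']] /=; by rewrite ?(negbTE (nz a)) ?(negbTE (nz b)).
Qed.

Lemma uniq3 (T : eqType) (a b c : T) : a != b -> a != c -> b != c -> uniq [:: a; b; c].
Proof. by move=> h1 h2 h3; rewrite /= !inE !negb_or h1 h2 h3. Qed.

Lemma uniq4 (T : eqType) (a b c d : T) : a != b -> a != c -> a != d -> b != c -> b != d -> c != d ->
  uniq [:: a; b; c; d].
Proof. by move=> h1 h2 h3 h4 h5 h6; rewrite /= !inE !negb_or h1 h2 h3 h4 h5 h6. Qed.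

Lemma star_mono (K : graph) : star 0 K -> star 1 K.
Proof. by move=> [S [hS rest]]; exists S; split => //; exact: leq_trans hS _. Qed.

Lemma crit1 n : critical 1 (Hg n).
Proof.
exists 1 => K [l [hl [s hs R]]] hK.
have el : l = n.+4.
  apply/eqP; rewrite eqn_leq; apply/andP; split.
  - exact: (proj2 (chi n) _ (proj1 hl)).
  - exact: (proj2 hl _ (proj1 (chi n))).
subst l.
have [k0 _] : exists k0 : V K, true by move/card_gt0P: hK => [k0 _]; exists k0.
have R' : RedH n K s by move=> p hp; exact: (R (Hg n) p hp).
case: s hs R R' => [|[|[|s]]] hs R R'.
- apply: star1_free.
  + move=> a b c hab hbc hac.
    apply: (@lev0 n K R' t0 [:: 0; 1; 2] [:: a; b; c] k0) => //; try by vm_compute.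
    * exact: uniq3 (adj_neq hab) (adj_neq hac) (adj_neq hbc).
    * by move=> [|[|[|i]]] [|[|[|j]]] //= _ _; rewrite /e1n /=.
  + move=> a b c hab hac hbc hca hcb.
    apply: (@lev0 n K R' [:: 1;1;1;0;0;2;2;0;2] [:: 3; 4; 7] [:: a; b; c] k0) => //; try by vm_compute.
    * by apply: uniq3 (adj_neq hab) _ _; rewrite eq_sym.
    * by move=> [|[|[|i]]] [|[|[|j]]] //= _ _; rewrite /e1n /= ?(negbTE hac) ?(negbTE hbc).
  + move=> a b c d hab hbc hcd hda hac hbd nac nbd.
    apply: (@lev0 n K R' [:: 0;0;1;2;2;2;0;1;0] [:: 0; 1; 8; 6] [:: a; b; c; d] k0) => //; try by vm_compute.
    * apply: uniq4 (adj_neq hab) nac _ (adj_neq hbc) nbd (adj_neq hcd).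
      by rewrite eq_sym (adj_neq hda).
    * move=> [|[|[|[|i]]]] [|[|[|[|j]]]] //= _ _; rewrite /e1n /= ?(negbTE hac) ?(negbTE hbd) //.
      by rewrite (@adj_sym K).
- apply: star_mono; apply: star0_free.
  + move=> a b c hab hbc hac nac.
    apply: (@lev1 n K R' [:: 0;1;0;2;1;2;0;1;2] [:: 2; 0; 6] [:: a; b; c] k0) => //; try by vm_compute.
    * exact: uniq3 (adj_neq hab) nac (adj_neq hbc).
    * by move=> [|[|[|i]]] [|[|[|j]]] //= _ _; rewrite /e1n /= ?(negbTE hac).
  + move=> a b c hab hac hbc hca hcb.
    apply: (@lev1 n K R' [:: 0;0;1;2;1;2;1;0;2] [:: 0; 1; 7] [:: a; b; c] k0) => //; try by vm_compute.
    * by apply: uniq3 (adj_neq hab) _ _; rewrite eq_sym.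
    * by move=> [|[|[|i]]] [|[|[|j]]] //= _ _; rewrite /e1n /= ?(negbTE hac) ?(negbTE hbc).
- by exfalso; exact: (lev2 R' k0).
- by exfalso; apply: (@lev3 n K s.+3 _ R' k0).
Qed.

Definition sadj m (x y : 'I_m.+1) : bool := (x == ord0) != (y == ord0).
Lemma sadj_sym m : symmetric (@sadj m).
Proof. by move=> x y; rewrite /sadj eq_sym. Qed.
Lemma sadj_irr m : irreflexive (@sadj m).
Proof. by move=> x; rewrite /sadj eqxx. Qed.
Definition Kstar m : graph := @Graph 'I_m.+1 (@sadj m) (@sadj_sym m) (@sadj_irr m).

Lemma red_star n m : reduced (Forb (Hg n)) (Kstar m).
Proof.
exists n.+4; split; first exact: chi.
exists 0 => // G p hp [e [einj eadj]].
have h0 := hp ord0; rewrite /= in h0.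
case: h0 => f hf.
pose A := fun x : VH n => p (e x) == ord0.
have hA : starlikeH A.
  case: (boolP [exists x : VH n, A x && (f (e x) == ord0)]) => [/existsP[c /andP[hc hfc]]|/existsPn hno].
  - right; exists c; split => //; split.
    + move=> x y hx hy hxc hyc.
      have fx : f (e x) != ord0.
        apply/negP => /eqP fx; move: hxc; rewrite -(eqP hfc) in fx.
        by have [/(_ fx) /einj -> _] := hf _ _ hx hc; rewrite eqxx.
      have fy : f (e y) != ord0.
        apply/negP => /eqP fy; move: hyc; rewrite -(eqP hfc) in fy.
        by have [/(_ fy) /einj -> _] := hf _ _ hy hc; rewrite eqxx.
      have [_ ha] := hf _ _ hx hy.
      by move: ha; rewrite /= /sadj (negbTE fx) (negbTE fy) /= eadj => /esym /negbT h; exact: h.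
    + move=> x hx hxc.
      have fx : f (e x) != ord0.
        apply/negP => /eqP fx; move: hxc; rewrite -(eqP hfc) in fx.
        by have [/(_ fx) /einj -> _] := hf _ _ hx hc; rewrite eqxx.
      have [_ ha] := hf _ _ hc hx.
      by move: ha; rewrite /= /sadj hfc (negbTE fx) /= eadj => /esym h; exact: h.
  - left=> x y hx hy.
    have fx : f (e x) != ord0 by have := hno x; rewrite hx.
    have fy : f (e y) != ord0 by have := hno y; rewrite hy.
    have [_ ha] := hf _ _ hx hy.
    by move: ha; rewrite /= /sadj (negbTE fx) (negbTE fy) /= eadj => /esym /negbT h; exact: h.
apply: (@key n A (fun x => nat_of_ord (p (e x))) hA).
- by move=> x hx; rewrite ltn_ord andbT lt0n.
- move=> x y hx hy hxy eq.
  have epq : p (e y) = p (e x) by apply: val_inj.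
  have := hp (p (e x)).
  have hx0 : (nat_of_ord (p (e x)) == 0) = false by apply/negbTE.
  rewrite hx0 leqn0 hx0 => /(_ (e x) (e y) (eqxx _)).
  rewrite epq eqxx => /(_ isT).
  have hne : e x != e y by apply/negP => /eqP /einj /eqP; apply/negP.
  by move=> /(_ hne); rewrite eadj.
Qed.

Lemma notstar0 m : 1 < m -> ~ star 0 (Kstar m).
Proof.
move=> hm [S [hS [hst _]]].
have S0 : S = set0 by apply: cards0_eq; lia.
subst S.
have h1 : (inord 1 : 'I_m.+1) != ord0 by apply/negP => /eqP /(congr1 val); rewrite /= inordK //; lia.
have h2 : (inord 2 : 'I_m.+1) != ord0 by apply/negP => /eqP /(congr1 val); rewrite /= inordK //; lia.
have h12 : (inord 1 : 'I_m.+1) != inord 2 by apply/negP => /eqP /(congr1 val); rewrite /= !inordK //; lia.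
case: hst => [hs|hc].
- have := hs ord0 (inord 1); rewrite !in_set0 => /(_ isT isT).
  by rewrite /= /sadj eqxx eq_sym (negbTE h1).
- have := hc (inord 1) (inord 2); rewrite !in_set0 => /(_ isT isT h12).
  by rewrite /= /sadj (negbTE h1) (negbTE h2).
Qed.

Theorem theorem2p6 :
  exists Hs : nat -> graph,
    (forall i j, i <> j -> ~ iso (Hs i) (Hs j)) /\
    (forall i, critical 1 (Hs i) /\ ~ critical 0 (Hs i)).
Proof.
exists Hg; split.
- move=> i j hij [f [hb _]].
  have := bij_eq_card hb; rewrite /= /VH !card_sum !card_prod !card_ord.
  lia.
- move=> i; split; first exact: crit1.
  move=> [n0 hn0].
  apply: (@notstar0 n0.+2) => //.
  apply: hn0; first exact: red_star.
  by rewrite /= card_ord; lia.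
Qed.
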